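(* Fix $p,t,n$ and a dropout distribution $\vec a$, and let $\Phi$ be any criterion satisfying (C.1)--(C.3). Then for every crossover design $d$ we have $\phi_0(d)\le\phi_1(d)$. Moreover, $e_0(d)\ge e_1(d)\,g(d)$ for every design $d$; in particular, if $d$ is $\phi_1$-optimal then $e_0(d)\ge g(d)$.
   Context: A crossover design $d$ with $p$ periods, $t$ treatments and $n$ subjects assigns treatment $d(k,u)\in\{1,\dots,t\}$ to subject $u$ in period $k$. Responses follow $Y_{dku}=\mu+\pi_k+\varsigma_u+\tau_{d(k,u)}+\gamma_{d(k-1,u)}+\varepsilon_{ku}$ (with $\gamma_{d(0,u)}=0$), errors independent with mean $0$, variance $1$. In vector form, with responses ordered subject by subject and within subject by period, $Y_d=1_{np}\mu+Z\pi+U\varsigma+T_d\tau+F_d\gamma+\varepsilon$, where $Z=1_n\otimes I_p$, $U=I_n\otimes 1_p$, $T_d$ is the $np\times t$ treatment incidence matrix (row $(u,k)$ is the indicator of $d(k,u)$) and $F_d$ the carryover incidence matrix (row $(u,1)$ zero, row $(u,k)$ the indicator of $d(k-1,u)$ for $k\ge2$). Subject dropout: $l_u\in\{1,\dots,p\}$ is the number of periods subject $u$ stays (no re-entry); $l_1,\dots,l_n$ are i.i.d., independent of the design and outcomes, with $P(l_u=k)=a_k$, $\vec a=(a_1,\dots,a_p)$. For integers $k\le i$, $I^k_{ij}$ is the $i\times j$ matrix whose upper-left $k\times k$ block is $I_k$ and other entries $0$. Let $M=\mathrm{diag}(I^{l_1}_{l_1p},\dots,I^{l_n}_{l_np})$,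 $\mathrm{pr}^\perp(G)=I-G(G'G)^-G'$ ($^-$ a generalized inverse, $[G_1|G_2]$ column concatenation), $O=M'\,\mathrm{pr}^\perp([MZ|MU])\,M$, $C_{d11}(l)=T_d'OT_d$, $C_{d12}(l)=T_d'OF_d=C_{d21}(l)'$, $C_{d22}(l)=F_d'OF_d$, and $C_d(\tau,l)=C_{d11}(l)-C_{d12}(l)C_{d22}(l)^-C_{d21}(l)$ (the information matrix for $\tau$ given dropout realization $l$). Let $C_{dij}=\mathbb E\,C_{dij}(l)$ (expectation over $l$) and $C_d=C_{d11}-C_{d12}C_{d22}^-C_{d21}$. A criterion $\Phi$ is a real function on $t\times t$ nonnegative definite matrices with (C.1) $\Phi$ concave; (C.2) $\Phi(S'CS)=\Phi(C)$ for every permutation matrix $S$; (C.3) $b\mapsto\Phi(bC)$ nondecreasing for $b>0$. Define $\phi_0(d)=\mathbb E\,\Phi(C_d(\tau,l))$ and $\phi_1(d)=\Phi(C_d)$. For $i=0,1$ let $d_i^*$ be a design maximizing $\phi_i$ over all designs with the given $p,t,n$, and $e_i(d)=\phi_i(d)/\phi_i(d_i^* )$; let $g(d)=\phi_0(d)/\phi_1(d)$. A design is $\phi_1$-optimal if it maximizes $\phi_1$. *)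

(* Defs.v *)
From HB Require Import structures.
From mathcomp Require Import all_boot all_order all_algebra all_fingroup.
Set Implicit Arguments. Unset Strict Implicit. Unset Printing Implicit Defensive.
Import Order.TTheory GRing.Theory Num.Theory.
Local Open Scope ring_scope.

Section Crossover.
Variables (R : realFieldType) (p t n : nat).

(* A crossover design: d u k = treatment (0-based, in 'I_t) given to subject u
   in period k (both 0-based). *)
Definition design := 'I_n -> 'I_p -> 'I_t.

(* A dropout realization: l u : 'I_p encodes l_u = (l u) + 1, the number of
   periods subject u stays. *)
Definition dropout := {ffun 'I_n -> 'I_p}.

(* Row index r of an np-vector, ordered subject by subject and within subject
   by period, decoded as (subject, period). *)
Definition idx (r : 'I_(n * p)) : 'I_n * 'I_p :=
  enum_val (cast_ord (esym (@mxvec_cast n p)) r).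

(* Z = 1_n (x) I_p ,  U = I_n (x) 1_p *)
Definition Zmx : 'M[R]_(n * p, p) := \matrix_(r, k) ((idx r).2 == k)%:R.
Definition Umx : 'M[R]_(n * p, n) := \matrix_(r, u) ((idx r).1 == u)%:R.

Definition Tmx (d : design) : 'M[R]_(n * p, t) :=
  \matrix_(r, i) (d (idx r).1 (idx r).2 == i)%:R.
Definition Fmx (d : design) : 'M[R]_(n * p, t) :=
  \matrix_(r, i)
    [exists k : 'I_p, (k.+1 == (idx r).2 :> nat) && (d (idx r).1 k == i)]%:R.

Definition obs (l : dropout) : seq 'I_(n * p) :=
  [seq c <- enum 'I_(n * p) | (((idx c).2 : nat) < (l (idx c).1).+1)%N].

(* M = diag(I^{l_1}_{l_1 p}, ..., I^{l_n}_{l_n p}) *)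
Definition Mmx (l : dropout) : 'M[R]_(size (obs l), n * p) :=
  \matrix_(r, c) (nth c (obs l) r == c)%:R.

(* generalized inverses are taken to be MathComp's pinvmx, which satisfies
   A *m pinvmx A *m A = A *)
Definition prperp m q (G : 'M[R]_(m, q)) : 'M[R]_m :=
  1%:M - G *m pinvmx (G^T *m G) *m G^T.

Definition Omx (l : dropout) : 'M[R]_(n * p) :=
  (Mmx l)^T *m prperp (row_mx (Mmx l *m Zmx) (Mmx l *m Umx)) *m Mmx l.

Definition C11 (d : design) l : 'M[R]_t := (Tmx d)^T *m Omx l *m Tmx d.
Definition C12 (d : design) l : 'M[R]_t := (Tmx d)^T *m Omx l *m Fmx d.
Definition C21 (d : design) l : 'M[R]_t := (C12 d l)^T.
Definition C22 (d : design) l : 'M[R]_t := (Fmx d)^T *m Omx l *m Fmx d.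

Definition Cinfo (d : design) l : 'M[R]_t :=
  C11 d l - C12 d l *m pinvmx (C22 d l) *m C21 d l.

(* probability of the realization l under the dropout distribution a,
   a k = P(l_u = k + 1) *)
Definition prob (a : 'I_p -> R) (l : dropout) : R := \prod_(u < n) a (l u).

Definition dropout_dist (a : 'I_p -> R) : Prop :=
  (forall k, 0 <= a k) /\ \sum_(k < p) a k = 1.

Definition ECij (Cij : design -> dropout -> 'M[R]_t) a d : 'M[R]_t :=
  \sum_(l : dropout) prob a l *: Cij d l.

Definition Cbar a (d : design) : 'M[R]_t :=
  ECij C11 a d - ECij C12 a d *m pinvmx (ECij C22 a d) *m ECij C21 a d.

Definition phi0 (Phi : 'M[R]_t -> R) a (d : design) : R :=
  \sum_(l : dropout) prob a l * Phi (Cinfo d l).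
Definition phi1 (Phi : 'M[R]_t -> R) a (d : design) : R := Phi (Cbar a d).

Definition nnd (C : 'M[R]_t) : Prop :=
  C^T = C /\ forall x : 'rV[R]_t, 0 <= (x *m C *m x^T) 0 0.

(* (C.1)-(C.3), required on nonnegative definite arguments *)
Definition criterion (Phi : 'M[R]_t -> R) : Prop :=
  (forall A B : 'M[R]_t, nnd A -> nnd B -> forall lam : R, 0 <= lam <= 1 ->
      lam * Phi A + (1 - lam) * Phi B <= Phi (lam *: A + (1 - lam) *: B))
  /\ (forall (s : 'S_t) (C : 'M[R]_t), nnd C ->
      Phi ((perm_mx s)^T *m C *m perm_mx s) = Phi C)
  /\ (forall (C : 'M[R]_t) (b1 b2 : R), nnd C -> 0 < b1 -> b1 <= b2 ->
      Phi (b1 *: C) <= Phi (b2 *: C)).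

End Crossover.

(* Main.v *)
From HB Require Import structures.
From mathcomp Require Import all_boot all_order all_algebra all_fingroup.
From mathcomp Require Import ring lra.
Require Import Defs.
Import Order.TTheory GRing.Theory Num.Theory.
Set Implicit Arguments. Unset Strict Implicit. Unset Printing Implicit Defensive.
Local Open Scope ring_scope.

Section Gen.
Variable R : realFieldType.

Lemma gram_diag m q (Z : 'M[R]_(m, q)) j : (Z^T *m Z) j j = \sum_i Z i j ^+ 2.
Proof. by rewrite !mxE; apply: eq_bigr => i _; rewrite mxE expr2. Qed.

Lemma gram_diag_ge0 m q (Z : 'M[R]_(m, q)) j : 0 <= (Z^T *m Z) j j.
Proof. by rewrite gram_diag; apply: sumr_ge0 => i _; apply: sqr_ge0. Qed.

Lemma gram0 m q (Z : 'M[R]_(m, q)) : (forall j, (Z^T *m Z) j j = 0) -> Z = 0.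
Proof.
move=> H; apply/matrixP => i j; rewrite mxE.
have := H j; rewrite gram_diag => /psumr_eq0P h.
by apply/eqP; rewrite -sqrf_eq0; apply/eqP; apply: h => // k _; apply: sqr_ge0.
Qed.

Lemma row_sq_ge0 m (u : 'rV[R]_m) : 0 <= (u *m u^T) 0 0.
Proof. by have := gram_diag_ge0 u^T 0; rewrite trmxK. Qed.

Lemma prperp_props m q (G : 'M[R]_(m, q)) :
  (prperp G)^T = prperp G /\ prperp G *m prperp G = prperp G.
Proof.
have key := mulmxKpV (submx_refl (G^T *m G)).
rewrite /prperp; move: (pinvmx _) key => H key.
have key' : G^T *m G *m H *m G^T *m G = G^T *m G by rewrite -mulmxA key.
have E0 : G *m H *m (G^T *m G) = G.
  set E := G *m H *m (G^T *m G) - G.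
  have h1 : G^T *m E = 0.
    by rewrite /E mulmxBr !mulmxA key' subrr.
  suff: E = 0 by move/eqP; rewrite subr_eq0 => /eqP.
  apply: gram0 => j.
  have hET : E^T = G^T *m G *m H^T *m G^T - G^T.
    by rewrite /E linearB /= !trmx_mul trmxK !mulmxA.
  clearbody E.
  have -> : E^T *m E = 0.
    by rewrite hET mulmxBl -!mulmxA h1 !mulmx0 subrr.
  by rewrite mxE.
have E0' : G *m H *m G^T *m G = G by rewrite -mulmxA E0.
have GT : G^T = G^T *m G *m H^T *m G^T.
  by rewrite -{1}E0 !trmx_mul trmxK !mulmxA.
have Psym : (G *m H *m G^T)^T = G *m H *m G^T.
  rewrite !trmx_mul trmxK mulmxA.
  by rewrite {2}GT !mulmxA E0'.
have Pid : G *m H *m G^T *m (G *m H *m G^T) = G *m H *m G^T.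
  by rewrite !mulmxA E0'.
split.
  by rewrite linearB /= trmx1 Psym.
by rewrite mulmxBl !mulmxBr !mul1mx mulmx1 Pid subrr subr0.
Qed.
End Gen.
Section Schur.
Variable R : realFieldType.
Lemma schur_id t (A B C : 'M[R]_t) : C^T = C ->
  (forall V : 'M_t, C *m V = 0 -> B *m V = 0) ->
  forall x y : 'rV_t,
  x *m A *m x^T + x *m B *m y^T + y *m B^T *m x^T + y *m C *m y^T =
  x *m (A - B *m pinvmx C *m B^T) *m x^T +
  (x *m (B *m pinvmx C) + y) *m C *m (x *m (B *m pinvmx C) + y)^T.
Proof.
move=> Cs Hk x y.
have key := mulmxKpV (submx_refl C).
move: (pinvmx C) key Hk => G key Hk.
have hB : B = B *m G *m C.
  have h : B *m (G *m C - 1%:M) = 0.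
    by apply: Hk; rewrite mulmxBr mulmx1 mulmxA key subrr.
  by move: h; rewrite mulmxBr mulmx1 mulmxA => /eqP; rewrite subr_eq0 => /eqP.
move: (B *m G) hB => K ->.
rewrite !trmx_mul Cs [(x *m K + y)^T]linearD /= trmx_mul.
rewrite !mulmxDl !mulmxDr ?mulmxN ?mulNmx !mulmxA.
by rewrite mulmxBl ?mulmxA !addrA subrK.
Qed.
End Schur.
Section Crit.
Variables (R : realFieldType) (t : nat) (Phi : 'M[R]_t -> R).
Hypothesis HPhi : criterion Phi.

Lemma nnd_comb (A B : 'M[R]_t) a b : nnd A -> nnd B -> 0 <= a -> 0 <= b ->
  nnd (a *: A + b *: B).
Proof.
move=> [sA pA] [sB pB] ha hb; split.
  by rewrite linearD /= !linearZ /= sA sB.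
move=> x; have := pA x; have := pB x.
have -> : x *m (a *: A + b *: B) *m x^T = a *: (x *m A *m x^T) + b *: (x *m B *m x^T).
  by rewrite mulmxDr mulmxDl -!scalemxAr -!scalemxAl.
set MA := x *m A *m x^T; set MB := x *m B *m x^T.
move=> h1 h2; clearbody MA MB; rewrite !mxE.
by apply: addr_ge0; apply: mulr_ge0.
Qed.

Lemma nnd_scale (A : 'M[R]_t) a : nnd A -> 0 <= a -> nnd (a *: A).
Proof.
move=> hA ha; have := nnd_comb hA hA ha (lexx 0).
by rewrite scale0r addr0.
Qed.

Lemma nnd0 : nnd (0 : 'M[R]_t).
Proof. by split; [rewrite trmx0 | move=> x; rewrite mulmx0 mul0mx mxE]. Qed.

Lemma Phi_mono (X D : 'M[R]_t) : nnd X -> nnd D -> Phi X <= Phi (X + D).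
Proof.
move=> hX hD; case: HPhi => Hc [_ Hs].
rewrite leNgt; apply/negP => hlt.
set d := Phi X - Phi (X + D).
have dpos : 0 < d by rewrite /d subr_gt0.
set L := (Phi (2%:R *: X) + Phi (2%:R *: D)) / 2%:R.
set s := 1 + `|Phi X - L| / d.
have s1 : 1 <= s by rewrite /s lerDl divr_ge0 // ltW.
have s0 : 0 < s by apply: lt_le_trans s1.
have up : Phi (X + s *: D) <= Phi X - s * d.
  have nXs : nnd (X + s *: D) by have := nnd_comb hX hD ler01 (ltW s0); rewrite scale1r.
  have h := Hc X (X + s *: D) hX nXs (1 - s^-1).
  have hlam : 0 <= 1 - s^-1 <= 1.
    apply/andP; split; last by rewrite lerBlDr lerDl invr_ge0 ltW.
    by rewrite subr_ge0 invf_le1.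
  move: (h hlam).
  have -> : (1 - s^-1) *: X + (1 - (1 - s^-1)) *: (X + s *: D) = X + D.
    apply/matrixP => i j; rewrite !mxE; field; by rewrite gt_eqF.
  rewrite /d => hh.
  have e : Phi (X + s *: D) = s * ((1 - s^-1) * Phi X + (1 - (1 - s^-1)) * Phi (X + s *: D)) - (s - 1) * Phi X.
    by field; rewrite gt_eqF.
  rewrite e; have := ler_wpM2l (ltW s0) hh; lra.
have lo : L <= Phi (X + s *: D).
  have h2 : 0 <= (2%:R : R) by [].
  have h := Hc (2%:R *: X) (2%:R *: (s *: D)) (nnd_scale hX h2)
      (nnd_scale (nnd_scale hD (ltW s0)) h2) (2%:R^-1).
  have hlam : 0 <= (2%:R : R)^-1 <= 1.
    apply/andP; split; lra.
  move: (h hlam).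
  have -> : 2%:R^-1 *: (2%:R *: X) + (1 - 2%:R^-1) *: (2%:R *: (s *: D)) = X + s *: D.
    by apply/matrixP => i j; rewrite !mxE; field.
  have : Phi (2%:R *: D) <= Phi ((2%:R * s) *: D).
    apply: Hs => //; lra.
  rewrite scalerA mulrC /L; lra.
have : s * d <= `|Phi X - L| by have := ler_norm (Phi X - L); lra.
have : `|Phi X - L| / d * d = `|Phi X - L| by field; rewrite gt_eqF.
rewrite /s; have := normr_ge0 (Phi X - L); nra.
Qed.

Lemma nnd_sum (I : Type) (r : seq I) (w : I -> R) (Cf : I -> 'M[R]_t) :
  (forall i, 0 <= w i) -> (forall i, nnd (Cf i)) ->
  nnd (\sum_(i <- r) w i *: Cf i).
Proof.
move=> hw hC; apply: big_ind.
- exact: nnd0.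
- by move=> A B hA hB; have := nnd_comb hA hB ler01 ler01; rewrite !scale1r.
- by move=> i _; apply: nnd_scale.
Qed.

Lemma jensen (I : eqType) (r : seq I) (w : I -> R) (Cf : I -> 'M[R]_t) :
  (forall i, 0 <= w i) -> (forall i, nnd (Cf i)) -> \sum_(i <- r) w i = 1 ->
  \sum_(i <- r) w i * Phi (Cf i) <= Phi (\sum_(i <- r) w i *: Cf i).
Proof.
case: HPhi => Hc _.
move=> + hC; elim: r w => [|h r IH] w hw.
  by rewrite big_nil => /eqP; rewrite eq_sym oner_eq0.
rewrite !big_cons => hs.
have S0 : 0 <= \sum_(i <- r) w i by apply: sumr_ge0.
case: (eqVneq (\sum_(i <- r) w i) 0) => hS.
  move: (hS) => /eqP; rewrite psumr_eq0 // => /allP hall.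
  have wi : forall i, i \in r -> w i = 0 by move=> i /hall /eqP.
  rewrite big1_seq; last by move=> i /andP [_ /wi ->]; rewrite mul0r.
  rewrite big1_seq; last by move=> i /andP [_ /wi ->]; rewrite scale0r.
  by move: hs; rewrite hS addr0 => ->; rewrite mul1r scale1r !addr0.
have Spos : 0 < \sum_(i <- r) w i by rewrite lt_def hS.
set S := \sum_(i <- r) w i in hs S0 hS Spos.
have hw' : forall i, 0 <= w i / S by move=> i; rewrite divr_ge0.
have hs' : \sum_(i <- r) w i / S = 1 by rewrite -mulr_suml /S divff.
have := IH _ hw' hs'.
set E := \sum_(i <- r) (w i / S) *: Cf i.
have nE : nnd E by apply: nnd_sum.
move=> hIH.
have hE : \sum_(i <- r) w i *: Cf i = S *: E.
  rewrite /E scaler_sumr; apply: eq_bigr => i _; rewrite scalerA.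
  by congr (_ *: _); field; rewrite gt_eqF.
have hL : \sum_(i <- r) w i * Phi (Cf i) = S * \sum_(i <- r) w i / S * Phi (Cf i).
  rewrite mulr_sumr; apply: eq_bigr => i _.
  by field; rewrite gt_eqF.
rewrite hE hL.
have hlam : 0 <= w h <= 1 by apply/andP; split => //; lra.
have := Hc _ _ (hC h) nE (w h) hlam.
have -> : 1 - w h = S by lra.
have := ler_wpM2l S0 hIH; lra.
Qed.
End Crit.

Section Core.
Variable R : realFieldType.
Variable t : nat.

Definition qf (M : 'M[R]_t) (x : 'rV[R]_t) : R := (x *m M *m x^T) 0 0.
Definition Qf (A B C : 'M[R]_t) (x y : 'rV[R]_t) : 'M[R]_1 :=
  x *m A *m x^T + x *m B *m y^T + y *m B^T *m x^T + y *m C *m y^T.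

Lemma qfB (M N : 'M[R]_t) x : qf (M - N) x = qf M x - qf N x.
Proof.
rewrite /qf mulmxBr mulmxBl.
move: (x *m M *m x^T) (x *m N *m x^T) => P Q; by rewrite !mxE.
Qed.

Lemma quad_sum (I : finType) (w : I -> R) (M : I -> 'M[R]_t) m1 m2
  (u : 'M[R]_(m1, t)) (v : 'M[R]_(t, m2)) :
  u *m (\sum_i w i *: M i) *m v = \sum_i w i *: (u *m M i *m v).
Proof.
rewrite mulmx_sumr mulmx_suml; apply: eq_bigr => i _.
by rewrite -scalemxAr -scalemxAl.
Qed.

Lemma qf_sum (I : finType) (w : I -> R) (M : I -> 'M[R]_t) x :
  qf (\sum_i w i *: M i) x = \sum_i w i * qf (M i) x.
Proof.
rewrite /qf quad_sum summxE; apply: eq_bigr => i _.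
move: (x *m M i *m x^T) => P; by rewrite mxE.
Qed.

Lemma Qf_sum (I : finType) (w : I -> R) (A B C : I -> 'M[R]_t) x y :
  Qf (\sum_i w i *: A i) (\sum_i w i *: B i) (\sum_i w i *: C i) x y =
  \sum_i w i *: Qf (A i) (B i) (C i) x y.
Proof.
rewrite /Qf.
have -> : (\sum_i w i *: B i)^T = \sum_i w i *: (B i)^T.
  by rewrite linear_sum; apply: eq_bigr => i _; rewrite linearZ.
  rewrite !quad_sum -!big_split /=; apply: eq_bigr => i _.
by rewrite !scalerDr.
Qed.

Lemma schur_KCK (B C : 'M[R]_t) : C^T = C ->
  (forall V : 'M_t, C *m V = 0 -> B *m V = 0) ->
  B *m pinvmx C *m B^T = (B *m pinvmx C) *m C *m (B *m pinvmx C)^T.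
Proof.
move=> Cs Hk.
have key := mulmxKpV (submx_refl C).
move: (pinvmx C) key Hk => G key Hk.
have hB : B = B *m G *m C.
  have h : B *m (G *m C - 1%:M) = 0.
    by apply: Hk; rewrite mulmxBr mulmx1 mulmxA key subrr.
  by move: h; rewrite mulmxBr mulmx1 mulmxA => /eqP; rewrite subr_eq0 => /eqP.
move: (B *m G) hB => K ->.
by rewrite !trmx_mul Cs !mulmxA.
Qed.

Lemma schur_sym (A B C : 'M[R]_t) : A^T = A -> C^T = C ->
  (forall V : 'M_t, C *m V = 0 -> B *m V = 0) ->
  (A - B *m pinvmx C *m B^T)^T = A - B *m pinvmx C *m B^T.
Proof.
move=> As Cs Hk; rewrite schur_KCK //.
move: (pinvmx C) => G.
by rewrite [(_ - _)^T]linearB /= As !trmx_mul !trmxK Cs !mulmxA.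
Qed.

Lemma schur_eq (A B C : 'M[R]_t) : C^T = C ->
  (forall V : 'M_t, C *m V = 0 -> B *m V = 0) -> forall x,
  qf (A - B *m pinvmx C *m B^T) x = (Qf A B C x (- (x *m (B *m pinvmx C)))) 0 0.
Proof.
move=> Cs Hk x; rewrite /qf /Qf schur_id // subrr !mul0mx addr0.
by [].
Qed.

Lemma schur_le (A B C : 'M[R]_t) : C^T = C ->
  (forall V : 'M_t, C *m V = 0 -> B *m V = 0) ->
  (forall z, 0 <= qf C z) -> forall x y,
  qf (A - B *m pinvmx C *m B^T) x <= (Qf A B C x y) 0 0.
Proof.
move=> Cs Hk hC x y; rewrite /Qf schur_id //.
have := hC (x *m (B *m pinvmx C) + y); rewrite /qf.
move: (x *m (A - B *m pinvmx C *m B^T) *m x^T) => P.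
move: ((x *m (B *m pinvmx C) + y) *m C *m (x *m (B *m pinvmx C) + y)^T) => Q.
by rewrite mxE lerDl.
Qed.

End Core.

Section Core2.
Variable R : realFieldType.
Variable t : nat.
Variables (I : finType) (mf : I -> nat) (X Y : forall i, 'M[R]_(mf i, t)) (w : I -> R).
Hypothesis hw : forall i, 0 <= w i.

Definition GA i := (X i)^T *m X i.
Definition GB i := (X i)^T *m Y i.
Definition GC i := (Y i)^T *m Y i.
Definition Sch (A B C : 'M[R]_t) := A - B *m pinvmx C *m B^T.
Definition Ab := \sum_i w i *: GA i.
Definition Bb := \sum_i w i *: GB i.
Definition Cb := \sum_i w i *: GC i.

Lemma GA_sym i : (GA i)^T = GA i.
Proof. by rewrite /GA trmx_mul trmxK. Qed.
Lemma GC_sym i : (GC i)^T = GC i.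
Proof. by rewrite /GC trmx_mul trmxK. Qed.

Lemma sum_sym (M : I -> 'M[R]_t) : (forall i, (M i)^T = M i) ->
  (\sum_i w i *: M i)^T = \sum_i w i *: M i.
Proof.
move=> h; rewrite linear_sum; apply: eq_bigr => i _; by rewrite linearZ /= h.
Qed.

Lemma ker_i i (V : 'M[R]_t) : GC i *m V = 0 -> GB i *m V = 0.
Proof.
move=> h.
have hz : Y i *m V = 0.
  apply: gram0 => j.
  by rewrite trmx_mul -mulmxA (mulmxA (Y i)^T) -/(GC i) mulmxA -mulmxA h mulmx0 mxE.
by rewrite /GB -mulmxA hz mulmx0.
Qed.

Lemma ker_bar (V : 'M[R]_t) : Cb *m V = 0 -> Bb *m V = 0.
Proof.
move=> h.
have hd : forall j, \sum_i w i * ((Y i *m V)^T *m (Y i *m V)) j j = 0.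
  move=> j.
  have : (V^T *m Cb *m V) j j = 0 by rewrite -mulmxA h mulmx0 mxE.
  rewrite /Cb quad_sum summxE => hh; apply: (etrans _ hh); apply: eq_bigr => i _.
  rewrite trmx_mul !mulmxA -(mulmxA _ (Y i)^T) -/(GC i).
  by move: (V^T *m GC i *m V) => P; rewrite mxE.
have hz : forall i, w i = 0 \/ Y i *m V = 0.
  move=> i; case: (eqVneq (w i) 0) => hwi; first by left.
  right; apply: gram0 => j.
  have := psumr_eq0P _ (hd j) (i := i) isT.
  move=> /(_ _)/eqP; rewrite mulf_eq0 (negbTE hwi) /= => /(_ _)/eqP; apply.
  by move=> k _; apply: mulr_ge0 => //; apply: gram_diag_ge0.
rewrite /Bb mulmx_suml; apply: big1 => i _.
case: (hz i) => [->|hy]; first by rewrite scale0r mul0mx.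
by rewrite -scalemxAl /GB -mulmxA hy mulmx0 scaler0.
Qed.

Lemma qfC_ge0 i z : 0 <= qf (GC i) z.
Proof.
rewrite /qf /GC !mulmxA.
have -> : z *m (Y i)^T *m Y i *m z^T = (z *m (Y i)^T) *m (z *m (Y i)^T)^T.
  by rewrite trmx_mul trmxK mulmxA.
exact: row_sq_ge0.
Qed.

Lemma Qf_ge0 i x y : 0 <= (Qf (GA i) (GB i) (GC i) x y) 0 0.
Proof.
have -> : Qf (GA i) (GB i) (GC i) x y =
    (x *m (X i)^T + y *m (Y i)^T) *m (x *m (X i)^T + y *m (Y i)^T)^T.
  rewrite /Qf /GA /GB /GC [(_ + _)^T]linearD /= !trmx_mul !trmxK.
  by rewrite !mulmxDl !mulmxDr !mulmxA !addrA.
exact: row_sq_ge0.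
Qed.

Lemma nnd_Si i : nnd (Sch (GA i) (GB i) (GC i)).
Proof.
split; first by apply: schur_sym; [exact: GA_sym|exact: GC_sym|exact: ker_i].
move=> x; rewrite -/(qf _ x) schur_eq; [exact: Qf_ge0|exact: GC_sym|exact: ker_i].
Qed.

Lemma nnd_Sb : nnd (Sch Ab Bb Cb).
Proof.
have Cs : Cb^T = Cb by apply: sum_sym; exact: GC_sym.
split; first by apply: schur_sym => //; [apply: sum_sym; exact: GA_sym|exact: ker_bar].
move=> x; rewrite -/(qf _ x) schur_eq //; last exact: ker_bar.
rewrite /Ab /Bb /Cb Qf_sum summxE; apply: sumr_ge0 => i _.
move: (Qf_ge0 i x (- (x *m (Bb *m pinvmx Cb)))); rewrite /Bb.
move: (Qf _ _ _ _ _) => P hP; rewrite mxE; exact: mulr_ge0.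
Qed.

Lemma loewner : nnd (Sch Ab Bb Cb - \sum_i w i *: Sch (GA i) (GB i) (GC i)).
Proof.
have Cs : Cb^T = Cb by apply: sum_sym; exact: GC_sym.
split.
  rewrite linearB /= sum_sym; last by move=> i; case: (nnd_Si i).
  by case: nnd_Sb => ->.
move=> x; rewrite -/(qf _ x) qfB qf_sum subr_ge0.
set y := - (x *m (Bb *m pinvmx Cb)).
rewrite schur_eq //; last exact: ker_bar.
rewrite /Ab /Bb /Cb Qf_sum summxE; apply: ler_sum => i _.
rewrite -/Bb -/Cb -/y.
have := schur_le (GA i) (GC_sym i) (@ker_i i) (@qfC_ge0 i) x y.
move: (Qf _ _ _ _ _) => P hP; rewrite mxE; exact: ler_wpM2l.
Qed.
End Core2.

Lemma gram_proj (R : realFieldType) m q k (G : 'M[R]_(m, q)) (M : 'M[R]_(m, k)) :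
  M^T *m prperp G *m M = (prperp G *m M)^T *m (prperp G *m M).
Proof.
have [h1 h2] := prperp_props G.
move: (prperp G) h1 h2 => P h1 h2.
by rewrite trmx_mul h1 !mulmxA -[M^T *m P *m P]mulmxA h2.
Qed.

Unset Implicit Arguments.
Theorem lemma2p2 (R : realFieldType) (p t n : nat) (a : 'I_p -> R)
    (Phi : 'M[R]_t -> R) (d0s d1s : design p t n) :
  dropout_dist a -> criterion Phi ->
  (forall d : design p t n, phi0 Phi a d <= phi0 Phi a d0s) ->
  (forall d : design p t n, phi1 Phi a d <= phi1 Phi a d1s) ->
  (forall d : design p t n, phi0 Phi a d <= phi1 Phi a d) /\
  ((forall C : 'M[R]_t, nnd C -> 0 <= Phi C) ->
   forall d : design p t n,
     let e0 := phi0 Phi a d / phi0 Phi a d0s in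
     let e1 := phi1 Phi a d / phi1 Phi a d1s in
     let g := phi0 Phi a d / phi1 Phi a d in
     e1 * g <= e0 /\
     ((forall d' : design p t n, phi1 Phi a d' <= phi1 Phi a d) -> g <= e0)).
Proof.
move=> [ha hsum] hcrit h0 h1.
have hw : forall l : dropout p n, 0 <= prob a l.
  by move=> l; apply: prodr_ge0 => u _.
have hw1 : \sum_(l : dropout p n) prob a l = 1.
  rewrite /prob -(bigA_distr_bigA (fun (_ : 'I_n) k => a k)) /=.
  by rewrite hsum big1.
have [W hO] : exists W : forall l : dropout p n, 'M[R]_(size (obs l), n * p),
    forall l, Omx R l = (W l)^T *m W l.
  by exists (fun l => prperp (row_mx (Mmx R l *m Zmx R p n) (Mmx R l *m Umx R p n)) *m Mmx R l) => l; rewrite /Omx gram_proj.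
have main : forall d : design p t n,
  phi0 Phi a d <= phi1 Phi a d /\ (forall l, nnd (Cinfo R d l)) /\ nnd (Cbar a d).
  move=> d.
  pose X := fun l => W l *m Tmx R d.
  pose Y := fun l => W l *m Fmx R d.
  have e11 : forall l, C11 R d l = GA X l.
    by move=> l; rewrite /C11 /GA hO /X trmx_mul !mulmxA.
  have e12 : forall l, C12 R d l = GB X Y l.
    by move=> l; rewrite /C12 /GB hO /X /Y trmx_mul !mulmxA.
  have e22 : forall l, C22 R d l = GC Y l.
    by move=> l; rewrite /C22 /GC hO /Y trmx_mul !mulmxA.
  have hC : forall l, Cinfo R d l = Sch (GA X l) (GB X Y l) (GC Y l).
    by move=> l; rewrite /Cinfo /C21 e11 e12 e22.
  have hCb : Cbar a d = Sch (Ab X (prob a)) (Bb X Y (prob a)) (Cb Y (prob a)).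
    rewrite /Cbar /Sch /ECij /Ab /Bb /Cb.
    have -> : \sum_l prob a l *: C21 R d l = (\sum_l prob a l *: GB X Y l)^T.
      rewrite linear_sum; apply: eq_bigr => l _.
      by rewrite linearZ /= /C21 e12.
    have -> : \sum_l prob a l *: C11 R d l = \sum_l prob a l *: GA X l.
      by apply: eq_bigr => l _; rewrite e11.
    have -> : \sum_l prob a l *: C12 R d l = \sum_l prob a l *: GB X Y l.
      by apply: eq_bigr => l _; rewrite e12.
    have -> : \sum_l prob a l *: C22 R d l = \sum_l prob a l *: GC Y l.
      by apply: eq_bigr => l _; rewrite e22.
    by [].
  have nS : forall l, nnd (Cinfo R d l) by move=> l; rewrite hC; apply: nnd_Si.
  have nSb : nnd (Cbar a d) by rewrite hCb; apply: nnd_Sb.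
  split; last by split.
  rewrite /phi0 /phi1.
  apply: le_trans (jensen hcrit hw nS hw1) _.
  have hL := loewner X Y hw.
  under eq_bigr do rewrite hC.
  rewrite hCb -[X in _ <= Phi X](subrK (\sum_i prob a i *: Sch (GA X i) (GB X Y i) (GC Y i))).
  rewrite addrC; apply: Phi_mono => //.
  by apply: nnd_sum => // l; apply: nnd_Si.
have part1 : forall d : design p t n, phi0 Phi a d <= phi1 Phi a d by move=> d; case: (main d).
split => // hpos d e0 e1 g.
have P0 : forall d' : design p t n, 0 <= phi0 Phi a d'.
  move=> d'; apply: sumr_ge0 => l _; apply: mulr_ge0 => //.
  by apply: hpos; case: (main d') => _ [].
have P1 : forall d' : design p t n, 0 <= phi1 Phi a d'.
  by move=> d'; apply: hpos; case: (main d') => _ [].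
have M0M1 : phi0 Phi a d0s <= phi1 Phi a d1s.
  exact: le_trans (part1 d0s) (h1 d0s).
have key : forall Z, phi1 Phi a d <= Z -> phi0 Phi a d0s <= Z ->
    phi0 Phi a d / Z <= e0.
  move=> Z hZ1 hZ0; rewrite /e0.
  case: (eqVneq (phi0 Phi a d0s) 0) => hm0.
    have : phi0 Phi a d = 0 by apply/eqP; rewrite eq_le P0 andbT -hm0 h0.
    by move=> ->; rewrite !mul0r.
  have m0pos : 0 < phi0 Phi a d0s by rewrite lt_def hm0 P0.
  apply: ler_wpM2l => //; rewrite lef_pV2 ?posrE //.
  exact: lt_le_trans hZ0.
split.
  rewrite /e1 /g.
  case: (eqVneq (phi1 Phi a d) 0) => hp1.
    rewrite hp1 invr0 !mulr0; rewrite /e0; apply: divr_ge0 => //.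
  have p1pos : 0 < phi1 Phi a d by rewrite lt_def hp1 P1.
  have -> : phi1 Phi a d / phi1 Phi a d1s * (phi0 Phi a d / phi1 Phi a d) =
      phi0 Phi a d / phi1 Phi a d1s.
    by field; rewrite gt_eqF // (lt_le_trans p1pos (h1 d)).
  apply: key => //; exact: h1.
move=> hopt; rewrite /g.
apply: key => //; exact: le_trans M0M1 (hopt d1s).
Qed.
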